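(* Setting: integers $N,Q,S\ge1$, $1\le M\le N$, $J\ge1$; $\mathbf{H}\in\mathbb{R}^{Q\times N}\setminus\{\mathbf{0}\}$, $\mathbf{y}\in\mathbb{R}^Q$, a real matrix $\mathbf{V}_0$ with $N$ columns, and for $s\in\{1,\dots,S\}$: $P_s\ge1$, $\mathbf{V}_s\in\mathbb{R}^{P_s\times N}$, $\mathbf{c}_s\in\mathbb{R}^{P_s}$; $\Phi:\mathbb{R}^Q\to\mathbb{R}$; functions $\psi_{s,\delta}:\mathbb{R}\to\mathbb{R}$ for $\delta>0$; $F_\delta(\mathbf{x})=\Phi(\mathbf{H}\mathbf{x}-\mathbf{y})+\sum_{s=1}^S\psi_{s,\delta}(\|\mathbf{V}_s\mathbf{x}-\mathbf{c}_s\|)+\|\mathbf{V}_0\mathbf{x}\|^2$. Assume: (A1i) $\Phi$ is continuous and coercive; (A1ii) for every $\delta>0$ and $s$, $\psi_{s,\delta}$ is continuous and nonnegative; (A1iii) $\operatorname{Ker}\mathbf{H}\cap\operatorname{Ker}\mathbf{V}_0=\{\mathbf{0}\}$. Fix $\delta>0$ and assume: (A3i) $\Phi$ is differentiable with $L$-Lipschitz gradient; (A3ii) each $\psi_{s,\delta}$ is differentiable; (A3iii) each $t\mapsto\psi_{s,\delta}(\sqrt t)$ is concave on $[0,+\infty)$; (A3iv) for each $s$ there is $\overline\omega_s\in[0,+\infty)$ with $0\le\dot\psi_{s,\delta}(t)\le\overline\omega_s t$ for all $t>0$, and $\lim_{t\to0}\dot\psi_{s,\delta}(t)/t\in\mathbb{R}$.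 Let $\omega_{s,\delta}(t)=\dot\psi_{s,\delta}(t)/t$, extended by continuity at $0$, fix $\mu\in[L,+\infty)$ and set $\mathbf{A}(\mathbf{x})=\mu\mathbf{H}^\top\mathbf{H}+2\mathbf{V}_0^\top\mathbf{V}_0+\mathbf{V}^\top\operatorname{Diag}\{\mathbf{b}(\mathbf{x})\}\mathbf{V}$, where $\mathbf{V}=[\mathbf{V}_1^\top|\cdots|\mathbf{V}_S^\top]^\top$ and $b_{P_1+\dots+P_{s-1}+p}(\mathbf{x})=\omega_{s,\delta}(\|\mathbf{V}_s\mathbf{x}-\mathbf{c}_s\|)$ for $p\in\{1,\dots,P_s\}$. Consider the iteration: $\mathbf{x}_0\in\mathbb{R}^N$; for each $k\in\mathbb{N}$, given any matrix $\mathbf{D}_k\in\mathbb{R}^{N\times M}$, set $\mathbf{u}_k^0=\mathbf{0}$ and for $j=1,\dots,J$: $\mathbf{B}_k^{j-1}=\mathbf{D}_k^\top\mathbf{A}(\mathbf{x}_k+\mathbf{D}_k\mathbf{u}_k^{j-1})\mathbf{D}_k$, $\mathbf{u}_k^j=\mathbf{u}_k^{j-1}-(\mathbf{B}_k^{j-1})^{\dagger}\mathbf{D}_k^\top\nabla F_\delta(\mathbf{x}_k+\mathbf{D}_k\mathbf{u}_k^{j-1})$ (pseudo-inverse $\dagger$); then $\mathbf{x}_{k+1}=\mathbf{x}_k+\mathbf{D}_k\mathbf{u}_k^J$. Write $\mathbf{x}_k^j=\mathbf{x}_k+\mathbf{D}_k\mathbf{u}_k^j$ and $\mathbf{g}_k^j=\nabla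 F_\delta(\mathbf{x}_k^j)$. Claim: for every $k\in\mathbb{N}$ and $j\in\{0,\dots,J-1\}$, $$\eta\|\mathbf{x}_k^{j+1}-\mathbf{x}_k^j\|\le\|\mathbf{g}_k^j\|,$$ where $\eta>0$ is the smallest eigenvalue of $\mu\mathbf{H}^\top\mathbf{H}+2\mathbf{V}_0^\top\mathbf{V}_0$.
   Context: $\|\cdot\|$ is the Euclidean norm; $\dot\psi_{s,\delta}$ is the derivative of $\psi_{s,\delta}$. *)

(* Defs.v *)
From HB Require Import structures.
From mathcomp Require Import all_boot all_order all_algebra.
From mathcomp Require Import all_classical all_reals all_analysis.
Set Implicit Arguments. Unset Strict Implicit. Unset Printing Implicit Defensive.
Import Order.TTheory GRing.Theory Num.Theory.
Import numFieldNormedType.Exports.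
Local Open Scope classical_set_scope.
Local Open Scope ring_scope.

Definition norm2 (R : realType) (n : nat) (v : 'cV[R]_n) : R :=
  Num.sqrt (\sum_(i < n) v i 0 ^+ 2).

Definition grad (R : realType) (n : nat) (f : 'cV[R]_n -> R) (x : 'cV[R]_n)
  : 'cV[R]_n := \col_(i < n) ('D_(delta_mx i 0) f x).

Definition coercive (R : realType) (n : nat) (f : 'cV[R]_n -> R) : Prop :=
  forall A : R, exists r : R, forall z, r <= norm2 z -> A <= f z.

Definition penrose (R : realType) (m n : nat) (A : 'M[R]_(m, n))
  (X : 'M[R]_(n, m)) : Prop :=
  [/\ A *m X *m A = A, X *m A *m X = X,
      (A *m X)^T = A *m X & (X *m A)^T = X *m A].

Definition mp_pinv (R : realType) (m n : nat) (A : 'M[R]_(m, n))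
  : 'M[R]_(n, m) := xget 0 [set X | penrose A X].

Definition Fdelta (R : realType) (N Q S R0 : nat) (P : 'I_S -> nat)
  (Phi : 'cV[R]_Q -> R) (psi : 'I_S -> R -> R -> R)
  (H : 'M[R]_(Q, N)) (y : 'cV[R]_Q) (V0 : 'M[R]_(R0, N))
  (V : forall s : 'I_S, 'M[R]_(P s, N)) (c : forall s : 'I_S, 'cV[R]_(P s))
  (delta : R) (x : 'cV[R]_N) : R :=
  Phi (H *m x - y) + \sum_(s < S) psi s delta (norm2 (V s *m x - c s))
  + norm2 (V0 *m x) ^+ 2.

Definition omega (R : realType) (f : R -> R) (t : R) : R :=
  if t == 0 then lim ((fun u => derive1 f u / u) @ 0^'+) else derive1 f t / t.

Definition Amaj (R : realType) (N Q S R0 : nat) (P : 'I_S -> nat)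
  (psi : 'I_S -> R -> R -> R)
  (H : 'M[R]_(Q, N)) (V0 : 'M[R]_(R0, N))
  (V : forall s : 'I_S, 'M[R]_(P s, N)) (c : forall s : 'I_S, 'cV[R]_(P s))
  (delta mu : R) (x : 'cV[R]_N) : 'M[R]_N :=
  let Vst : 'M[R]_(\sum_(s < S) P s, N) := \mxcol_(s < S) V s in
  mu *: (H^T *m H) + 2%:R *: (V0^T *m V0)
  + Vst^T *m (\mxdiag_(s < S) (omega (psi s delta) (norm2 (V s *m x - c s)))%:M)
      *m Vst.

(* Main.v *)
Require Import Defs.
From HB Require Import structures.
From mathcomp Require Import all_boot all_order all_algebra.
From mathcomp Require Import all_classical all_reals all_analysis.
From mathcomp Require Import ring lra.
Import Order.TTheory GRing.Theory Num.Theory.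
Import numFieldNormedType.Exports.
Local Open Scope classical_set_scope.
Local Open Scope ring_scope.
Set Implicit Arguments. Unset Strict Implicit. Unset Printing Implicit Defensive.

Section Q.
Variable R : realType.

Definition bf n (M : 'M[R]_n) (a b : 'cV[R]_n) : R := (a^T *m M *m b) 0 0.
Definition sq n (a : 'cV[R]_n) : R := (a^T *m a) 0 0.

Lemma sqE n (a : 'cV[R]_n) : sq a = \sum_i a i 0 ^+ 2.
Proof. by rewrite /sq mxE; apply: eq_bigr => i _; rewrite mxE expr2. Qed.

Lemma sq_ge0 n (a : 'cV[R]_n) : 0 <= sq a.
Proof. by rewrite sqE sumr_ge0 // => i _; rewrite sqr_ge0. Qed.

Lemma sq1 n (a : 'cV[R]_n) : sq a = bf 1%:M a a.
Proof. by rewrite /bf /sq mulmx1. Qed.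

Lemma norm2_sq n (a : 'cV[R]_n) : norm2 a = Num.sqrt (sq a).
Proof. by rewrite sqE. Qed.

Lemma bf_tr n (M : 'M[R]_n) a b : bf M b a = bf M^T a b.
Proof.
have -> : bf M b a = ((b^T *m M *m a)^T) 0 0 by rewrite mxE.
by rewrite /bf !trmx_mul trmxK mulmxA.
Qed.

Lemma bf_expand n (M : 'M[R]_n) a b t :
  bf M (a - t *: b) (a - t *: b) =
  bf M a a - t * bf M a b - t * bf M b a + t ^+ 2 * bf M b b.
Proof.
rewrite /bf.
have -> : (a - t *: b)^T = a^T - t *: b^T by rewrite linearB linearZ.
rewrite !mulmxDl !mulmxDr !mulNmx !mulmxN -!scalemxAl -!scalemxAr.
rewrite !(mxE, scalerN) /=; ring.
Qed.

Lemma bfDM n (M1 M2 : 'M[R]_n) a b : bf (M1 + M2) a b = bf M1 a b + bf M2 a b.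
Proof. by rewrite /bf mulmxDr mulmxDl mxE. Qed.

Lemma bfZM n (c : R) (M : 'M[R]_n) a b : bf (c *: M) a b = c * bf M a b.
Proof. by rewrite /bf -scalemxAr -scalemxAl mxE. Qed.

Lemma bf_sumM n (I : finType) (F : I -> 'M[R]_n) a b :
  bf (\sum_i F i) a b = \sum_i bf (F i) a b.
Proof. by rewrite /bf mulmx_sumr mulmx_suml summxE. Qed.

Lemma bf_mul m n (W : 'M[R]_(m, n)) a : bf (W^T *m W) a a = sq (W *m a).
Proof. by rewrite /bf /sq trmx_mul !mulmxA. Qed.

Lemma bfE n (M : 'M[R]_n) a b : bf M a b = \sum_j \sum_i a i 0 * M i j * b j 0.
Proof.
rewrite /bf mxE; apply: eq_bigr => j _; rewrite mxE mulr_suml.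
by apply: eq_bigr => i _; rewrite mxE.
Qed.

Definition Kn n (M : 'M[R]_n) : R := \sum_j \sum_i `|M i j|.

Lemma coord_le n (a : 'cV[R]_n) i : a i 0 ^+ 2 <= sq a.
Proof.
rewrite sqE (bigD1 i) //= lerDl sumr_ge0 // => k _; exact: sqr_ge0.
Qed.

Lemma bf_bound n (M : 'M[R]_n) a : `|bf M a a| <= Kn M * sq a.
Proof.
rewrite bfE /Kn mulr_suml; apply: (le_trans (ler_norm_sum _ _ _)).
apply: ler_sum => j _; rewrite mulr_suml.
apply: (le_trans (ler_norm_sum _ _ _)); apply: ler_sum => i _.
have h1 := coord_le a i; have h2 := coord_le a j.
rewrite !normrM; set p := `|a i 0|; set q := `|a j 0|.
have p0 : 0 <= p by exact: normr_ge0.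
have q0 : 0 <= q by exact: normr_ge0.
have hp : p ^+ 2 <= sq a by rewrite /p real_normK ?num_real.
have hq : q ^+ 2 <= sq a by rewrite /q real_normK ?num_real.
have m0 : 0 <= `|M i j| by exact: normr_ge0.
have : p * q <= sq a by nra.
move=> h; rewrite [_ * `|M i j|]mulrC -mulrA; exact: ler_wpM2l.
Qed.


Lemma bf0 n (M : 'M[R]_n) : bf M 0 0 = 0.
Proof. by rewrite /bf trmx0 mul0mx mulmx0 mxE. Qed.

Lemma sq_pos n (w : 'cV[R]_n) : w != 0 -> 0 < sq w.
Proof.
move=> w0; rewrite lt_neqAle sq_ge0 andbT eq_sym; apply/negP => /eqP h.
move/negP: w0; apply; apply/eqP/matrixP => i j; rewrite (ord1 j) mxE.
have := coord_le w i; rewrite h => h2.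
by apply/eqP; rewrite -sqrf_eq0 eq_le h2 sqr_ge0.
Qed.

Lemma Kn_ge0 n (M : 'M[R]_n) : 0 <= Kn M.
Proof. by rewrite /Kn sumr_ge0 // => j _; rewrite sumr_ge0 // => i _. Qed.

Lemma eig_lb n (M : 'M[R]_n) eta : M^T = M ->
  (forall a, eigenvalue M a -> eta <= a) -> forall z, eta * sq z <= bf M z z.
Proof.
move=> sym hmin z.
have [->|z0] := eqVneq z 0; first by rewrite bf0 /sq trmx0 mul0mx mxE mulr0.
set E := [set r : R | exists w, w != 0 /\ r = bf M w w / sq w].
have lbE : lbound E (- Kn M).
  move=> r [w [w0 ->]]; have sp := sq_pos w0.
  rewrite ler_pdivlMr // mulNr; have := bf_bound M w.
  by rewrite ler_norml => /andP[].
have hE : has_lbound E by exists (- Kn M).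
have neE : E !=set0 by exists (bf M z z / sq z), z.
set m := inf E.
have hm : forall w, m * sq w <= bf M w w.
  move=> w; have [->|w0] := eqVneq w 0; first by rewrite bf0 /sq trmx0 mul0mx mxE mulr0.
  have sp := sq_pos w0.
  by rewrite -ler_pdivlMr //; apply: ge_inf => //; exists w.
suff em : eta <= m.
  apply: le_trans (hm z); apply: ler_wpM2r => //; exact: sq_ge0.
apply: hmin; rewrite /eigenvalue /eigenspace kermx_eq0 row_free_unit.
apply/negP => Cu.
set C := M - m%:M.
have CE : C = M + (- m) *: 1%:M by rewrite scaleNr scalemx1.
have Csym : C^T = C by rewrite /C linearB /= tr_scalar_mx sym.
have Cq : forall w, bf C w w = bf M w w - m * sq w.
  by move=> w; rewrite CE bfDM bfZM -sq1 mulNr.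
set Ci := invmx C.
set K' := Kn Ci^T + 1.
have K'pos : 0 < K' by rewrite /K'; have := Kn_ge0 Ci^T; lra.
set t := K'^-1.
have tpos : 0 < t by rewrite invr_gt0.
have tK : t * K' = 1 by rewrite mulVf // gt_eqF.
have key : forall w, t * sq w <= bf C w w.
  move=> w; set w' := Ci *m w.
  have Cw : C *m w' = w by rewrite /w' mulKVmx.
  have e1 : bf C w w' = sq w by rewrite /bf -mulmxA Cw.
  have e2 : bf C w' w = sq w by rewrite bf_tr Csym e1.
  have e3 : bf C w' w' = bf Ci^T w w.
    by rewrite /bf -mulmxA Cw /w' trmx_mul.
  have h0 : 0 <= bf C (w - t *: w') (w - t *: w').
    by rewrite Cq subr_ge0; exact: hm.
  rewrite bf_expand e1 e2 e3 in h0.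
  have hb := bf_bound Ci^T w; move: hb; rewrite ler_norml => /andP[_ hb].
  have s0 := sq_ge0 w.
  rewrite /K' in tK.
  set q := bf Ci^T w w in h0 hb; set a := bf C w w in h0 *.
  set s := sq w in h0 hb s0 *; set k := Kn Ci^T in hb tK.
  have k0 : 0 <= k by exact: Kn_ge0.
  have h1 : t ^+ 2 * q <= t ^+ 2 * (k * s) by rewrite ler_wpM2l // sqr_ge0.
  have h2 : t ^+ 2 * (k * s) = t * s - t ^+ 2 * s.
    have -> : t * s = t * (t * (k + 1)) * s by rewrite tK mulr1.
    ring.
  have h3 : 0 <= t ^+ 2 * s by rewrite mulr_ge0 // sqr_ge0.
  lra.
have : m + t <= m.
  apply: lb_le_inf => // r [w [w0 ->]]; have sp := sq_pos w0.
  rewrite ler_pdivlMr // mulrDl; have := key w; rewrite Cq; lra.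
lra.
Qed.

End Q.
Lemma penrose_uniq (R : realType) m n (A : 'M[R]_(m, n)) X Y :
  penrose A X -> penrose A Y -> X = Y.
Proof.
case=> [X1 X2 X3 X4] [Y1 Y2 Y3 Y4].
have hAT : A^T = A^T *m Y^T *m A^T by rewrite -!trmx_mul mulmxA Y1.
have e1 : X *m (X^T *m A^T) = X by rewrite -trmx_mul X3 mulmxA X2.
have e2 : X^T *m A^T = X^T *m A^T *m (Y^T *m A^T) by rewrite {1}hAT !mulmxA.
have eX : X = X *m A *m Y.
  by rewrite -{1}e1 e2 -[X^T *m A^T]trmx_mul -[Y^T *m A^T]trmx_mul X3 Y3 !mulmxA X2.
have hAT' : A^T = A^T *m X^T *m A^T by rewrite -!trmx_mul mulmxA X1.
have f2 : A^T *m Y^T *m Y = Y by rewrite -trmx_mul Y4 Y2.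
have f3 : A^T *m Y^T = A^T *m X^T *m (A^T *m Y^T) by rewrite {1}hAT' !mulmxA.
have eY : Y = X *m A *m Y.
  rewrite -{1}f2 f3 -[A^T *m X^T]trmx_mul -[A^T *m Y^T]trmx_mul X4 Y4.
  by rewrite -mulmxA Y2.
by rewrite eY.
Qed.

Lemma penrose_sym (R : realType) n (A : 'M[R]_n) X :
  A^T = A -> penrose A X -> X^T = X.
Proof.
move=> sA pX; apply: (penrose_uniq _ pX).
case: pX => [X1 X2 X3 X4]; split.
- have h := congr1 trmx X1; rewrite !trmx_mul sA mulmxA in h; exact h.
- have h := congr1 trmx X2; rewrite !trmx_mul sA mulmxA in h; exact h.
- by rewrite trmx_mul trmxK sA -X4 trmx_mul sA.
- by rewrite trmx_mul trmxK sA -X3 trmx_mul sA.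
Qed.
Lemma omega_ge0 (R : realType) (f : R -> R) t : 0 <= t ->
  (forall t, 0 < t -> 0 <= derive1 f t) ->
  (exists l : R, (fun u => derive1 f u / u) @ (0:R)^'+ --> l) -> 0 <= omega f t.
Proof.
move=> t0 hd [l hl]; rewrite /omega; case: ifPn => [_|tn0].
  apply: limr_ge; first exact: cvgP hl.
  near=> w; have w0 : 0 < w by near: w; exact: nbhs_right_gt.
  by rewrite divr_ge0 // ?hd // ltW.
have tp : 0 < t by rewrite lt_neqAle eq_sym tn0.
by rewrite divr_ge0 // hd.
Unshelve. all: by end_near.
Qed.

Lemma Amaj_dec (R : realType) (N Q S R0 : nat) (P : 'I_S -> nat)
  (psi : 'I_S -> R -> R -> R)
  (H : 'M[R]_(Q, N)) (V0 : 'M[R]_(R0, N))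
  (V : forall s : 'I_S, 'M[R]_(P s, N)) (c : forall s : 'I_S, 'cV[R]_(P s))
  (delta mu : R) (x : 'cV[R]_N) :
  Amaj psi H V0 V c delta mu x = mu *: (H^T *m H) + 2%:R *: (V0^T *m V0)
   + \sum_s omega (psi s delta) (norm2 (V s *m x - c s)) *: ((V s)^T *m V s).
Proof.
rewrite /Amaj tr_mxcol -mulmxA mul_mxdiag_mxcol mul_mxrow_mxcol.
congr (_ + _); apply: eq_bigr => s _.
by rewrite mul_scalar_mx -scalemxAr.
Qed.
Theorem lemma4 (R : realType) (N Q S M J R0 : nat) (P : 'I_S -> nat)
  (H : 'M[R]_(Q, N)) (y : 'cV[R]_Q) (V0 : 'M[R]_(R0, N))
  (V : forall s : 'I_S, 'M[R]_(P s, N)) (c : forall s : 'I_S, 'cV[R]_(P s))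
  (Phi : 'cV[R]_Q -> R) (psi : 'I_S -> R -> R -> R)
  (delta L mu eta : R)
  (D : nat -> 'M[R]_(N, M)) (x : nat -> 'cV[R]_N)
  (u : nat -> nat -> 'cV[R]_M) :
  (0 < N)%N -> (0 < Q)%N -> (0 < S)%N -> (0 < M)%N -> (M <= N)%N ->
  (0 < J)%N -> (forall s, (0 < P s)%N) ->
  H != 0 ->
  (* (A1i) *)
  continuous Phi -> coercive Phi ->
  (* (A1ii) *)
  (forall d, 0 < d -> forall s, continuous (psi s d) /\ forall t, 0 <= psi s d t) ->
  (* (A1iii) *)
  (forall z : 'cV[R]_N, H *m z = 0 -> V0 *m z = 0 -> z = 0) ->
  0 < delta ->
  (* (A3i) *)
  (forall z, differentiable Phi z) ->
  (forall z1 z2, norm2 (grad Phi z1 - grad Phi z2) <= L * norm2 (z1 - z2)) ->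
  (* (A3ii) *)
  (forall s t, derivable (psi s delta) t 1) ->
  (* (A3iii) *)
  (forall s a b l, 0 <= a -> 0 <= b -> 0 <= l <= 1 ->
     l * psi s delta (Num.sqrt a) + (1 - l) * psi s delta (Num.sqrt b)
     <= psi s delta (Num.sqrt (l * a + (1 - l) * b))) ->
  (* (A3iv) *)
  (forall s, exists2 wbar, 0 <= wbar &
     forall t, 0 < t -> 0 <= derive1 (psi s delta) t <= wbar * t) ->
  (forall s, exists l : R,
     (fun t => derive1 (psi s delta) t / t) @ 0^'+ --> l) ->
  L <= mu ->
  (* the iteration *)
  (forall k, u k 0%N = 0) ->
  (forall k j, (j < J)%N ->
     u k j.+1 = u k j
       - mp_pinv ((D k)^T *m Amaj psi H V0 V c delta mu (x k + D k *m u k j) *m D k)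
         *m (D k)^T *m grad (Fdelta Phi psi H y V0 V c delta) (x k + D k *m u k j)) ->
  (forall k, x k.+1 = x k + D k *m u k J) ->
  (* eta = smallest eigenvalue of mu H^T H + 2 V0^T V0 *)
  eigenvalue (mu *: (H^T *m H) + 2%:R *: (V0^T *m V0)) eta ->
  (forall a, eigenvalue (mu *: (H^T *m H) + 2%:R *: (V0^T *m V0)) a -> eta <= a) ->
  forall k j, (j < J)%N ->
    eta * norm2 ((x k + D k *m u k j.+1) - (x k + D k *m u k j))
    <= norm2 (grad (Fdelta Phi psi H y V0 V c delta) (x k + D k *m u k j)).
Proof.
move=> N0 Q0 S0 M0 MN J0 P0 Hn0 cPhi coPhi A1ii A1iii dpos dPhi Lip dpsi conc A3iv A3lim Lmu
  hu0 hu hx eigeta hmin k j jJ.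
rewrite (hu k j jJ).
set xs := x k + D k *m u k j.
set A := Amaj psi H V0 V c delta mu xs.
set g := grad _ xs.
set Bm := (D k)^T *m A *m D k.
set X := mp_pinv Bm.
set h := (D k)^T *m g.
set v := D k *m (X *m h).
have -> : x k + D k *m (u k j - X *m (D k)^T *m g) - xs = - v.
  by rewrite /xs /v /h mulmxBr !mulmxA opprD addrACA subrr add0r addrC addKr.
have -> : norm2 (- v) = norm2 v.
  by rewrite /norm2; congr Num.sqrt; apply: eq_bigr => i _; rewrite mxE sqrrN.
set gv := bf 1%:M g v.
suff kv : eta * sq v <= gv.
  have hq : 0 <= bf 1%:M (g - eta *: v) (g - eta *: v) by rewrite -sq1 sq_ge0.
  rewrite bf_expand (bf_tr _ g v) trmx1 -!sq1 -/gv in hq.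
  have sv0 := sq_ge0 v; have sg0 := sq_ge0 g.
  rewrite !norm2_sq.
  have [eta0|etap] := leP eta 0.
    by apply: le_trans (sqrtr_ge0 _); rewrite mulr_le0_ge0 // sqrtr_ge0.
  have -> : eta * Num.sqrt (sq v) = Num.sqrt (eta ^+ 2 * sq v).
    by rewrite sqrtrM ?sqr_ge0 // sqrtr_sqr gtr0_norm.
  rewrite ler_sqrt //.
  have : eta * (eta * sq v) <= eta * gv by rewrite ler_wpM2l // ltW.
  rewrite mulrA -expr2; lra.
have [[X0 pX0]|nX] := pselect (exists X0, penrose Bm X0); last first.
  have X0 : X = 0 by rewrite /X /mp_pinv xgetPN // => X1 pX1; apply: nX; exists X1.
  by rewrite /gv /v X0 mul0mx mulmx0 /bf /sq !mulmx0 mxE mulr0.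
have pX : penrose Bm X by rewrite /X /mp_pinv; apply: xgetPex; exists X0.
have Asym : A^T = A.
  rewrite /A Amaj_dec !linearD /= !linearZ /= !trmx_mul !trmxK linear_sum /=.
  by congr (_ + _); apply: eq_bigr => s _; rewrite linearZ /= trmx_mul trmxK.
have Bsym : Bm^T = Bm by rewrite /Bm !trmx_mul trmxK Asym mulmxA.
have Xsym := penrose_sym Bsym pX.
have e : bf A v v = gv.
  have P2h : X *m ((D k)^T *m (A *m (D k *m (X *m h)))) = X *m h.
    case: pX => _ P2 _ _; move: P2; rewrite /Bm => P2.
    by rewrite !mulmxA in P2; rewrite !mulmxA P2.
  rewrite /gv /bf /v mulmx1 !trmx_mul Xsym -!mulmxA P2h.
  by rewrite trmxK.
rewrite -e.
have A0sym : (mu *: (H^T *m H) + 2%:R *: (V0^T *m V0))^T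
             = mu *: (H^T *m H) + 2%:R *: (V0^T *m V0).
  by rewrite !linearD /= !linearZ /= !trmx_mul !trmxK.
apply: le_trans (eig_lb A0sym hmin v) _.
rewrite /A Amaj_dec (bfDM _ (\sum_s _)) lerDl bf_sumM sumr_ge0 // => s _.
rewrite bfZM bf_mul mulr_ge0 ?sq_ge0 //.
apply: omega_ge0; first exact: sqrtr_ge0.
- move=> t tp; have [wb _ hwb] := A3iv s; by case/andP: (hwb t tp).
- exact: A3lim.
Qed.
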